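(* Let $E$ be a nonempty bounded subset of $M_a$ and $p\in E$, and let positive reals $r_0,r_1,r_2,\dots$ be fixed with $E\subset \mathrm{GS}^n(E,p)\cap B_{r_n}(p)$ for every $n\ge0$. Then: (i) $\mathrm{GS}^n(E,p)-p$ is a real vector space for each $n\in\mathbb N$; (ii) $\mathrm{GS}^{n-1}(E,p)\subset\mathrm{GS}^n(E,p)$ for each $n\in\mathbb N$; (iii) $\mathrm{GS}^2(E,p)=\overline{\mathrm{GS}(E,p)}$, the closure of $\mathrm{GS}(E,p)$ in $M_a$; (iv) $\Lambda(\mathrm{GS}^n(E,p))=\Lambda(\mathrm{GS}^n(E,p)\cap B_{r_n}(p))$ for all $n\in\mathbb N$.
   Context: Let $a=\{a_i\}$ be a sequence of positive reals with $\sum_i a_i^2<\infty$, $M_a=\{x\in\mathbb{R}^{\mathbb N}:\sum_i a_i^2x_i^2<\infty\}$ with inner product $\langle x,y\rangle_a=\sum_i a_i^2x_iy_i$ and norm $\|\cdot\|_a$; $B_r(x)=\{y\in M_a:\|y-x\|_a<r\}$. $e_i$ denotes the sequence with $1$ in position $i$ and $0$ elsewhere. For nonempty $A\subset M_a$, $\Lambda(A)$ is the set of $i\in\mathbb N$ for which there exist $x\in A$ and $\alpha\ne0$ with $x+\alpha e_i\in A$. For $p\in A\subset M_a$, $\mathrm{GS}(A,p)=\{p+\sum_i\alpha_i(x_i-p)\in M_a: x_i\in A,\ \alpha_i\in\mathbb R\}$, the index running over a finite or countable subset of $\mathbb N$ and infinite sums being $\|\cdot\|_a$-limits of partial sums.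 Iterates: $\mathrm{GS}^0(E,p)=E$ and $\mathrm{GS}^n(E,p)=\mathrm{GS}\big(\mathrm{GS}^{n-1}(E,p)\cap B_{r_{n-1}}(p),\,p\big)$ for $n\in\mathbb N$. *)

(* Defs.v *)
From Stdlib Require Import Reals.
From Coquelicot Require Import Coquelicot.
Open Scope R_scope.

Definition seqR := nat -> R.
Definition setR := seqR -> Prop.

Definition inMa (a : seqR) (x : seqR) : Prop :=
  ex_series (fun i => (a i)^2 * (x i)^2).

Definition norm_a (a : seqR) (x : seqR) : R :=
  sqrt (Series (fun i => (a i)^2 * (x i)^2)).

Definition sub_seq (x y : seqR) : seqR := fun i => x i - y i.

Definition ball_a (a : seqR) (x : seqR) (r : R) : setR :=
  fun y => inMa a y /\ norm_a a (sub_seq y x) < r.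

Definition inter (A B : setR) : setR := fun x => A x /\ B x.
Definition subset (A B : setR) : Prop := forall x, A x -> B x.
Definition set_eq (A B : setR) : Prop := forall x, A x <-> B x.

Definition e_ (i : nat) : seqR := fun j => if Nat.eqb j i then 1 else 0.

Definition Lambda (A : setR) : nat -> Prop :=
  fun i => exists x alpha, A x /\ alpha <> 0 /\ A (fun j => x j + alpha * e_ i j).

Fixpoint psum (f : nat -> R) (N : nat) : R :=
  match N with O => 0 | S m => psum f m + f m end.

Definition comb (p : seqR) (x : nat -> seqR) (alpha : nat -> R) (N : nat) : seqR :=
  fun j => p j + psum (fun k => alpha k * (x k j - p j)) N.

Definition GS (a : seqR) (A : setR) (p : seqR) : setR :=
  fun y => inMa a y /\
    ((exists (N : nat) (x : nat -> seqR) (alpha : nat -> R),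
        (forall k, (k < N)%nat -> A (x k)) /\ y = comb p x alpha N)
     \/
     (exists (x : nat -> seqR) (alpha : nat -> R),
        (forall k, A (x k)) /\
        is_lim_seq (fun N => norm_a a (sub_seq (comb p x alpha N) y)) 0)).

Fixpoint GSn (a : seqR) (E : setR) (p : seqR) (r : nat -> R) (n : nat) : setR :=
  match n with
  | O => E
  | S m => GS a (inter (GSn a E p r m) (ball_a a p (r m))) p
  end.

Definition translate_is_subspace (A : setR) (p : seqR) : Prop :=
  let S := fun v => exists x, A x /\ v = sub_seq x p in
  S (fun _ => 0) /\
  (forall u v, S u -> S v -> S (fun j => u j + v j)) /\
  (forall (c : R) u, S u -> S (fun j => c * u j)).

Definition closure_a (a : seqR) (A : setR) : setR :=
  fun y => inMa a y /\ forall eps, 0 < eps -> exists z, A z /\ norm_a a (sub_seq z y) < eps.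

(* Main.v *)
Require Import Defs.
From Stdlib Require Import Reals Lra Psatz Arith Lia FunctionalExtensionality IndefiniteDescription.
From Coquelicot Require Import Coquelicot.
Open Scope R_scope.

Lemma exs_lin (u v : nat -> R) c d : ex_series u -> ex_series v ->
  ex_series (fun i => c * u i + d * v i).
Proof.
  intros hu hv.
  apply (@ex_series_plus R_AbsRing R_NormedModule (fun i => c * u i) (fun i => d * v i)).
  - apply (@ex_series_scal_l R_AbsRing R_NormedModule c u hu).
  - apply (@ex_series_scal_l R_AbsRing R_NormedModule d v hv).
Qed.

Lemma inMa_lin a u v c d : inMa a u -> inMa a v ->
  inMa a (fun i => c * u i + d * v i).
Proof.
  unfold inMa; intros hu hv.
  apply (@ex_series_le R_AbsRing R_CompleteNormedModule _
     (fun i => (2*c^2) * ((a i)^2 * (u i)^2) + (2*d^2) * ((a i)^2 * (v i)^2))).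
  - intro n. change (Rabs ((a n)^2 * (c * u n + d * v n)^2) <= 2 * c ^ 2 * (a n ^ 2 * u n ^ 2) + 2 * d ^ 2 * (a n ^ 2 * v n ^ 2)). rewrite Rabs_pos_eq.
    + assert (0 <= (a n)^2) by apply pow2_ge_0.
      assert (0 <= (c * u n - d * v n)^2) by apply pow2_ge_0.
      nra.
    + apply Rmult_le_pos; apply pow2_ge_0.
  - apply exs_lin; auto.
Qed.

Lemma inMa_ext a u v : (forall i, u i = v i) -> inMa a u -> inMa a v.
Proof. intros h. replace v with u; auto. apply functional_extensionality; auto. Qed.

Lemma Series_zero : Series (fun _ : nat => 0) = 0.
Proof. rewrite (Series_ext _ (fun n => 0 * 0)) by (intros; ring). rewrite Series_scal_l. ring. Qed.

Lemma Q_nonneg a u : inMa a u -> 0 <= Series (fun i => (a i)^2 * (u i)^2).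
Proof.
  intro h. rewrite <- Series_zero. apply Series_le; auto.
  intro n; split; [lra| apply Rmult_le_pos; apply pow2_ge_0].
Qed.

Lemma norm_zero a : norm_a a (fun _ => 0) = 0.
Proof.
  unfold norm_a. rewrite (Series_ext _ (fun _ => 0)) by (intros; simpl; ring).
  rewrite Series_zero. apply sqrt_0.
Qed.

Lemma norm_nonneg a u : 0 <= norm_a a u.
Proof. apply sqrt_pos. Qed.

Lemma norm_scal a c u : norm_a a (fun i => c * u i) = Rabs c * norm_a a u.
Proof.
  unfold norm_a.
  rewrite (Series_ext _ (fun i => c^2 * ((a i)^2 * (u i)^2))) by (intros; ring).
  rewrite Series_scal_l, sqrt_mult_alt, <- sqrt_Rsqr_abs.
  - unfold Rsqr; f_equal; f_equal; ring.
  - nra.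
Qed.

Lemma norm_add_le a u v : inMa a u -> inMa a v ->
  norm_a a (fun i => u i + v i) <= 2 * (norm_a a u + norm_a a v).
Proof.
  intros hu hv. pose proof (Q_nonneg a u hu) as HX. pose proof (Q_nonneg a v hv) as HY.
  unfold norm_a.
  set (X := Series (fun i => a i ^ 2 * u i ^ 2)) in *.
  set (Y := Series (fun i => a i ^ 2 * v i ^ 2)) in *.
  assert (HZ : Series (fun i => a i^2 * (u i + v i)^2) <= 2*X + 2*Y).
  { apply Rle_trans with (Series (fun i => 2 * (a i ^ 2 * u i ^ 2) + 2 * (a i ^ 2 * v i ^ 2))).
    - apply Series_le.
      + intro n. split. apply Rmult_le_pos; apply pow2_ge_0.
        assert (0 <= (a n)^2) by apply pow2_ge_0.
        assert (0 <= (u n - v n)^2) by apply pow2_ge_0.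
        nra.
      + apply exs_lin; auto.
    - rewrite Series_plus.
      + rewrite !Series_scal_l. unfold X, Y. lra.
      + exact (@ex_series_scal_l R_AbsRing R_NormedModule 2 _ hu).
      + exact (@ex_series_scal_l R_AbsRing R_NormedModule 2 _ hv). }
  apply Rle_trans with (sqrt (2*X + 2*Y)); [apply sqrt_le_1_alt; auto|].
  pose proof (sqrt_pos X). pose proof (sqrt_pos Y).
  rewrite <- (sqrt_pow2 (2*(sqrt X + sqrt Y))) by lra. apply sqrt_le_1_alt.
  pose proof (sqrt_sqrt X HX). pose proof (sqrt_sqrt Y HY). nra.
Qed.

Lemma lim0_elim (s : nat -> R) : is_lim_seq s 0 ->
  forall eps, 0 < eps -> exists N, forall n, (N <= n)%nat -> Rabs (s n) < eps.
Proof.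
  intro H; apply is_lim_seq_Reals in H; intros eps he.
  destruct (H eps he) as [N HN]; exists N; intros n hn; specialize (HN n hn).
  unfold R_dist in HN; rewrite Rminus_0_r in HN; exact HN.
Qed.

Lemma lim0_intro (s : nat -> R) :
  (forall eps, 0 < eps -> exists N, forall n, (N <= n)%nat -> Rabs (s n) < eps) ->
  is_lim_seq s 0.
Proof.
  intro H; apply is_lim_seq_Reals; intros eps he.
  destruct (H eps he) as [N HN]; exists N; intros n hn; specialize (HN n hn).
  unfold R_dist; rewrite Rminus_0_r; exact HN.
Qed.

Lemma psum_ext f g N : (forall k, (k < N)%nat -> f k = g k) -> psum f N = psum g N.
Proof.
  induction N; intros h; simpl; auto.
  rewrite IHN by (intros; apply h; lia). rewrite (h N) by lia. auto.
Qed.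

Lemma psum_tail f N : (forall k, (N <= k)%nat -> f k = 0) ->
  forall M, (N <= M)%nat -> psum f M = psum f N.
Proof.
  intros h M; induction M; intros hM.
  - replace N with 0%nat by lia; auto.
  - destruct (Nat.eq_dec N (S M)) as [e|ne]; [subst; auto|].
    simpl. rewrite IHM by lia. rewrite (h M) by lia. ring.
Qed.

Lemma psum_scal c f N : psum (fun k => c * f k) N = c * psum f N.
Proof. induction N; simpl; [ring|rewrite IHN; ring]. Qed.

Lemma comb_Ma a p x alpha N : inMa a p -> (forall k, (k < N)%nat -> inMa a (x k)) ->
  inMa a (comb p x alpha N).
Proof.
  intros hp; induction N; intros hx.
  - apply (inMa_ext a p); auto. intro i; unfold comb; simpl; ring.
  - assert (hw : inMa a (fun j => 1 * x N j + (-1) * p j)) by (apply inMa_lin; auto).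
    assert (h2 : inMa a (fun j => 1 * comb p x alpha N j + alpha N * (1 * x N j + (-1) * p j))).
    { apply inMa_lin; auto. }
    apply (inMa_ext a _ _ (fun i => eq_sym _) ) in h2 || idtac.
    revert h2; apply inMa_ext. intro i; unfold comb; simpl; ring.
Qed.

Section GSsec.
Variables (a : seqR) (A : setR) (p : seqR).
Hypothesis hAp : A p.
Hypothesis hAM : forall x, A x -> inMa a x.

Lemma hpM : inMa a p. Proof. auto. Qed.

Definition rep (y : seqR) := exists x alpha, (forall k, A (x k)) /\
  is_lim_seq (fun N => norm_a a (sub_seq (comb p x alpha N) y)) 0.

Lemma GS_iff y : GS a A p y <-> inMa a y /\ rep y.
Proof.
  split.
  - intros [hy [[N [x [alpha [hx ->]]]] | H]]; split; auto.
    exists (fun k => if (k <? N)%nat then x k else p),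
           (fun k => if (k <? N)%nat then alpha k else 0).
    split.
    + intro k; destruct (k <? N)%nat eqn:E; auto. apply hx. apply Nat.ltb_lt; auto.
    + apply (is_lim_seq_ext_loc (fun _ => 0)).
      * exists N. intros M hM.
        replace (sub_seq _ _) with (fun _ : nat => 0). { rewrite norm_zero; auto. }
        apply functional_extensionality; intro j. unfold sub_seq, comb.
        assert (ht : forall k, (N <= k)%nat -> (if (k <? N)%nat then alpha k else 0) *
           ((if (k <? N)%nat then x k else p) j - p j) = 0).
        { intros k hk. destruct (k <? N)%nat eqn:E. apply Nat.ltb_lt in E; lia. ring. }
        rewrite (psum_tail _ N ht M hM).
        rewrite (psum_ext _ (fun k => alpha k * (x k j - p j))).
        ring. intros k hk. apply Nat.ltb_lt in hk. rewrite hk. auto.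
      * apply is_lim_seq_const.
  - intros [hy [x [alpha [hx hl]]]]. split; auto. right. exists x, alpha; auto.
Qed.

Lemma GS_p : GS a A p p.
Proof.
  split; auto. left. exists 0%nat, (fun _ => p), (fun _ => 0). split; [intros; lia|].
  apply functional_extensionality; intro j; unfold comb; simpl; ring.
Qed.

Lemma GS_scal y c : GS a A p y -> GS a A p (fun j => p j + c * (y j - p j)).
Proof.
  rewrite !GS_iff. intros [hy [x [alpha [hx hl]]]]. split.
  - apply (inMa_ext a (fun j => (1 - c) * p j + c * y j)). intro; ring. apply inMa_lin; auto.
  - exists x, (fun k => c * alpha k). split; auto.
    apply (is_lim_seq_ext (fun N => Rabs c * norm_a a (sub_seq (comb p x alpha N) y))).
    + intro N. rewrite <- norm_scal. f_equal. apply functional_extensionality; intro j.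
      unfold sub_seq, comb.
      rewrite (psum_ext (fun k => c * alpha k * (x k j - p j)) (fun k => c * (alpha k * (x k j - p j)))) by (intros; ring).
      rewrite psum_scal. ring.
    + replace (Finite 0) with (Rbar_mult (Rabs c) 0) by (simpl; f_equal; ring).
      apply is_lim_seq_scal_l; auto.
Qed.

Fixpoint il {T} (g h : nat -> T) (k : nat) : T :=
  match k with O => g O | S O => h O | S (S k') => il (fun n => g (S n)) (fun n => h (S n)) k' end.

Lemma il_even {T} n : forall (g h : nat -> T), il g h (2 * n) = g n.
Proof.
  induction n; intros; auto. replace (2 * S n)%nat with (S (S (2 * n))) by lia.
  simpl il. rewrite IHn. auto.
Qed.

Lemma il_odd {T} n : forall (g h : nat -> T), il g h (S (2 * n)) = h n.
Proof.
  induction n; intros; auto. replace (S (2 * S n))%nat with (S (S (S (2 * n)))) by lia.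
  change (il g h (S (S (S (2 * n))))) with (il (fun n => g (S n)) (fun n => h (S n)) (S (2 * n))).
  rewrite IHn. auto.
Qed.

Lemma psum_il (x x2 : nat -> seqR) al be j n :
  psum (fun k => il al be k * (il x x2 k j - p j)) (2 * n)
  = psum (fun k => al k * (x k j - p j)) n + psum (fun k => be k * (x2 k j - p j)) n /\
  psum (fun k => il al be k * (il x x2 k j - p j)) (S (2 * n))
  = psum (fun k => al k * (x k j - p j)) (S n) + psum (fun k => be k * (x2 k j - p j)) n.
Proof.
  induction n.
  - simpl. split; ring.
  - destruct IHn as [h1 h2]. 
    assert (e1 : psum (fun k => il al be k * (il x x2 k j - p j)) (2 * S n) =
      psum (fun k => il al be k * (il x x2 k j - p j)) (S (2 * n)) + il al be (S (2 * n)) * (il x x2 (S (2 * n)) j - p j)).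
    { replace (2 * S n)%nat with (S (S (2 * n))) by lia. reflexivity. }
    rewrite e1, !il_odd, h2. split.
    + simpl. ring.
    + change (psum (fun k => il al be k * (il x x2 k j - p j)) (S (2 * S n))) with
        (psum (fun k => il al be k * (il x x2 k j - p j)) (2 * S n) + il al be (2 * S n) * (il x x2 (2 * S n) j - p j)).
      rewrite e1, !il_odd, !il_even, h2. simpl. ring.
Qed.

Lemma GS_add y z : GS a A p y -> GS a A p z -> GS a A p (fun j => y j + z j - p j).
Proof.
  rewrite !GS_iff. intros [hy [x [al [hx hl]]]] [hz [x2 [be [hx2 hl2]]]]. split.
  - apply (inMa_ext a (fun j => 1 * (1 * y j + 1 * z j) + (-1) * p j)). intro; ring.
    apply inMa_lin; auto. apply inMa_lin; auto.
  - exists (il x x2), (il al be). split.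
    + intro k. destruct (Nat.Even_or_Odd k) as [[m ->]|[m ->]].
      * rewrite il_even; auto.
      * replace (2 * m + 1)%nat with (S (2 * m)) by lia. rewrite il_odd; auto.
    + set (u := fun N => norm_a a (sub_seq (comb p x al N) y)).
      set (v := fun N => norm_a a (sub_seq (comb p x2 be N) z)).
      assert (hm : forall (X : nat -> seqR) (ga : nat -> R) N w, (forall k, A (X k)) -> inMa a w ->
                inMa a (sub_seq (comb p X ga N) w)).
      { intros. apply (inMa_ext a (fun j => 1 * comb p X ga N j + (-1) * w j)).
        intro; unfold sub_seq; ring. apply inMa_lin; auto. apply comb_Ma; auto. }
      assert (hb : forall N n1 n2, (forall j, comb p (il x x2) (il al be) N j =
                   p j + psum (fun k => al k * (x k j - p j)) n1 + psum (fun k => be k * (x2 k j - p j)) n2) ->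
             norm_a a (sub_seq (comb p (il x x2) (il al be) N) (fun j => y j + z j - p j)) <= 2 * (u n1 + v n2)).
      { intros N n1 n2 hN. unfold u, v.
        replace (sub_seq (comb p (il x x2) (il al be) N) (fun j => y j + z j - p j)) with
          (fun j => sub_seq (comb p x al n1) y j + sub_seq (comb p x2 be n2) z j).
        - apply norm_add_le; auto.
        - apply functional_extensionality; intro j. unfold sub_seq. rewrite hN. unfold comb. ring. }
      apply lim0_intro. intros eps he.
      destruct (lim0_elim u hl (eps/4)) as [N1 H1]; [lra|].
      destruct (lim0_elim v hl2 (eps/4)) as [N2 H2]; [lra|].
      exists (2 * (N1 + N2))%nat. intros N hN.
      rewrite Rabs_pos_eq by apply norm_nonneg.
      destruct (Nat.Even_or_Odd N) as [[m ->]|[m ->]].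
      * eapply Rle_lt_trans. apply (hb _ m m).
        { intro j. unfold comb. rewrite (proj1 (psum_il x x2 al be j m)). ring. }
        specialize (H1 m ltac:(lia)). specialize (H2 m ltac:(lia)).
        pose proof (Rle_abs (u m)). pose proof (Rle_abs (v m)). lra.
      * replace (2 * m + 1)%nat with (S (2 * m)) by lia.
        eapply Rle_lt_trans. apply (hb _ (S m) m).
        { intro j. unfold comb. rewrite (proj2 (psum_il x x2 al be j m)). ring. }
        specialize (H1 (S m) ltac:(lia)). specialize (H2 m ltac:(lia)).
        pose proof (Rle_abs (u (S m))). pose proof (Rle_abs (v m)). lra.
Qed.

Lemma GS_sub : translate_is_subspace (GS a A p) p.
Proof.
  unfold translate_is_subspace. split; [|split].
  - exists p. split. apply GS_p. apply functional_extensionality; intro; unfold sub_seq; ring.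
  - intros u v [x1 [h1 ->]] [x2 [h2 ->]]. exists (fun j => x1 j + x2 j - p j). split.
    apply GS_add; auto. apply functional_extensionality; intro; unfold sub_seq; ring.
  - intros c u [x1 [h1 ->]]. exists (fun j => p j + c * (x1 j - p j)). split.
    apply GS_scal; auto. apply functional_extensionality; intro; unfold sub_seq; ring.
Qed.

Lemma comb_GS x alpha N : (forall k, (k < N)%nat -> GS a A p (x k)) -> GS a A p (comb p x alpha N).
Proof.
  induction N; intros hx.
  - replace (comb p x alpha 0) with p. apply GS_p.
    apply functional_extensionality; intro; unfold comb; simpl; ring.
  - replace (comb p x alpha (S N)) with
      (fun j => comb p x alpha N j + (p j + alpha N * (x N j - p j)) - p j).
    + apply GS_add. apply IHN; intros; apply hx; lia. apply GS_scal; apply hx; lia.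
    + apply functional_extensionality; intro; unfold comb; simpl; ring.
Qed.

End GSsec.

Lemma shrink_norm a p w rho : 0 < rho ->
  0 < (norm_a a (sub_seq w p) + 1) / rho /\
  norm_a a (sub_seq (fun j => p j + / ((norm_a a (sub_seq w p) + 1) / rho) * (w j - p j)) p) < rho.
Proof.
  intros hr. set (d := norm_a a (sub_seq w p)). pose proof (norm_nonneg a (sub_seq w p)) as hd.
  fold d in hd. assert (hc : 0 < (d + 1) / rho) by (apply Rdiv_lt_0_compat; lra).
  split; auto.
  replace (sub_seq _ p) with (fun j => / ((d + 1) / rho) * sub_seq w p j).
  - rewrite norm_scal. fold d. rewrite Rabs_pos_eq by (left; apply Rinv_0_lt_compat; auto).
    replace (/ ((d + 1) / rho)) with (rho / (d + 1)) by (field; lra).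
    apply Rmult_lt_reg_r with (d + 1); [lra|].
    replace (rho / (d + 1) * d * (d + 1)) with (rho * d) by (field; lra). nra.
  - apply functional_extensionality; intro j; unfold sub_seq; ring.
Qed.

Lemma GS_single a A p z y c : A z -> inMa a y -> (forall j, y j = p j + c * (z j - p j)) ->
  GS a A p y.
Proof.
  intros hz hy he. split; auto. left. exists 1%nat, (fun _ => z), (fun _ => c).
  split. intros; auto. apply functional_extensionality; intro j; unfold comb; simpl. rewrite he; ring.
Qed.

Lemma GS_mono a A B p : subset A B -> subset (GS a A p) (GS a B p).
Proof.
  intros h y [hy [[N [x [al [hx e]]]] | [x [al [hx hl]]]]]; split; auto.
  - left. exists N, x, al. split; auto.
  - right. exists x, al. split; auto.
Qed.

Lemma scale_lt t d D rho : 0 < rho -> 0 <= d -> d <= D -> t = rho / (D + 1) -> t * d < rho.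
Proof.
  intros hr hd hD ht. assert (h : t * (D + 1) = rho) by (subst; field; lra).
  assert (0 < t) by (subst; apply Rdiv_lt_0_compat; lra). nra.
Qed.

Lemma Lambda_shrink a A p rho i : A p -> (forall x, A x -> inMa a x) -> 0 < rho ->
  Lambda (GS a A p) i -> Lambda (inter (GS a A p) (ball_a a p rho)) i.
Proof.
  intros hAp hAM hr [x [al [hx [hal hx']]]].
  set (x' := fun j => x j + al * e_ i j) in hx'.
  pose proof (norm_nonneg a (sub_seq x p)). pose proof (norm_nonneg a (sub_seq x' p)).
  set (d1 := norm_a a (sub_seq x p)) in *. set (d2 := norm_a a (sub_seq x' p)) in *.
  set (t := rho / (d1 + d2 + 1)).
  assert (ht : 0 < t) by (apply Rdiv_lt_0_compat; lra).
  assert (key : forall y d, GS a A p y -> d = norm_a a (sub_seq y p) -> d <= d1 + d2 ->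
     inter (GS a A p) (ball_a a p rho) (fun j => p j + t * (y j - p j))).
  { intros y d hy hd hdd. assert (hs : GS a A p (fun j => p j + t * (y j - p j))) by (apply GS_scal; auto). split; auto. split.
    - destruct hs; auto.
    - replace (sub_seq _ p) with (fun j => t * sub_seq y p j).
      + rewrite norm_scal, Rabs_pos_eq by lra. rewrite <- hd.
        apply (scale_lt t d (d1 + d2)); auto; subst d; try apply norm_nonneg; auto.
      + apply functional_extensionality; intro j; unfold sub_seq; ring. }
  exists (fun j => p j + t * (x j - p j)), (t * al). split; [|split].
  - apply (key x d1); auto. lra.
  - intro h. apply Rmult_integral in h. lra.
  - replace (fun j => p j + t * (x j - p j) + t * al * e_ i j) with (fun j => p j + t * (x' j - p j)).
    + apply (key x' d2); auto. lra.
    + apply functional_extensionality; intro j; unfold x'; ring.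
Qed.

Theorem lemma3p13 (a : nat -> R) (E : (nat -> R) -> Prop) (p : nat -> R) (r : nat -> R)
  (ha_pos : forall i, 0 < a i)
  (ha_sum : ex_series (fun i => (a i)^2))
  (hE_Ma : forall x, E x -> inMa a x)
  (hE_ne : exists x, E x)
  (hE_bdd : exists M, forall x, E x -> norm_a a x <= M)
  (hp : E p)
  (hr : forall n, 0 < r n)
  (hEsub : forall n, subset E (inter (GSn a E p r n) (ball_a a p (r n)))) :
  (forall n, (1 <= n)%nat -> translate_is_subspace (GSn a E p r n) p) /\
  (forall n, (1 <= n)%nat -> subset (GSn a E p r (n - 1)) (GSn a E p r n)) /\
  set_eq (GSn a E p r 2) (closure_a a (GS a E p)) /\
  (forall n, (1 <= n)%nat ->
     forall i, Lambda (GSn a E p r n) i <-> Lambda (inter (GSn a E p r n) (ball_a a p (r n))) i).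
Proof.
  assert (hGM : forall n x, GSn a E p r n x -> inMa a x).
  { intros [|n] x h; [apply hE_Ma; auto | destruct h; auto]. }
  assert (hAp : forall m, inter (GSn a E p r m) (ball_a a p (r m)) p).
  { intro m. apply hEsub; auto. }
  assert (hAM : forall m x, inter (GSn a E p r m) (ball_a a p (r m)) x -> inMa a x).
  { intros m x [h _]. eapply hGM; eauto. }
  split; [|split; [|split]].
  - intros m hn; destruct m as [|m]; [lia|]. simpl. apply GS_sub; first [apply hAp | intros ? ?; eapply hAM; eassumption].
  - intros n hn; destruct n as [|n]; [lia|]. replace (S n - 1)%nat with n by lia. destruct n as [|k].
    + intros y hy. simpl. apply (GS_single a _ p y y 1); auto.
      * apply (hEsub 0%nat y hy).
      * intro; ring.
    + intros y hy.
      destruct (shrink_norm a p y (r (S k)) (hr (S k))) as [hc hn3].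
      set (c := (norm_a a (sub_seq y p) + 1) / r (S k)) in *.
      assert (hz : GSn a E p r (S k) (fun j => p j + / c * (y j - p j))).
      { simpl. apply GS_scal; [apply hAp | intros ? ?; eapply hAM; eassumption | exact hy]. }
      change (GS a (inter (GSn a E p r (S k)) (ball_a a p (r (S k)))) p y).
      apply (GS_single a _ p (fun j => p j + / c * (y j - p j)) y c).
      * split; auto. split; auto. eapply hGM; eauto.
      * eapply hGM; eauto.
      * intro j. field. lra.
  - assert (hE0 : forall x, E x -> inter E (ball_a a p (r 0%nat)) x).
    { intros x hx. apply (hEsub 0%nat x hx). }
    assert (HG1 : forall x, GS a (inter E (ball_a a p (r 0%nat))) p x <-> GS a E p x).
    { intro x; split; apply GS_mono; intros z hz; auto. destruct hz; auto. }
    assert (hAM0 : forall x, inter E (ball_a a p (r 0%nat)) x -> inMa a x).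
    { intros x [h _]; auto. }
    intro y; split.
    + intro hy.
      change (GS a (inter (GS a (inter E (ball_a a p (r 0%nat))) p) (ball_a a p (r 1%nat))) p y) in hy.
      destruct hy as [hyM [[N [x [al [hx ->]]]] | [x [al [hx hl]]]]].
      * split; auto. intros eps he. exists (comb p x al N). split.
        -- apply HG1. apply comb_GS; auto. intros k hk. destruct (hx k hk); auto.
        -- replace (sub_seq _ _) with (fun _ : nat => 0). rewrite norm_zero; auto.
           apply functional_extensionality; intro; unfold sub_seq; ring.
      * split; auto. intros eps he. destruct (lim0_elim _ hl eps he) as [N HN].
        exists (comb p x al N). split.
        -- apply HG1. apply comb_GS; auto. intros k hk. destruct (hx k); auto.
        -- specialize (HN N (le_n N)). pose proof (Rle_abs (norm_a a (sub_seq (comb p x al N) y))). lra.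
    + intros [hyM hcl].
      assert (hz : forall k : nat, exists z, GS a E p z /\ norm_a a (sub_seq z y) < / INR (S k)).
      { intro k. apply hcl. apply Rinv_0_lt_compat. apply lt_0_INR. lia. }
      destruct (functional_choice _ hz) as [z hzf].
      set (w := fun k => match k with O => z O | S k' => fun j => z (S k') j - z k' j + p j end).
      assert (hw : forall k, GS a E p (w k)).
      { intros [|k]; simpl. apply hzf.
        replace (fun j => z (S k) j - z k j + p j) with
          (fun j => z (S k) j + (p j + (-1) * (z k j - p j)) - p j).
        - apply GS_add; auto. apply hzf. apply GS_scal; auto. apply hzf.
        - apply functional_extensionality; intro; ring. }
      set (rho := r 1%nat).
      set (c := fun k => (norm_a a (sub_seq (w k) p) + 1) / rho).
      set (x := fun k => fun j => p j + / c k * (w k j - p j)).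
      assert (hcx : forall k, 0 < c k /\ norm_a a (sub_seq (x k) p) < rho).
      { intro k. apply shrink_norm. apply hr. }
      change (GS a (inter (GS a (inter E (ball_a a p (r 0%nat))) p) (ball_a a p rho)) p y).
      split; auto. right. exists x, c. split.
      * intro k. assert (hxk : GS a E p (x k)) by (apply GS_scal; auto).
        split. apply HG1; auto. split. destruct hxk; auto. apply hcx.
      * apply is_lim_seq_incr_1.
        apply is_lim_seq_le_le with (u := fun _ => 0) (w := fun N => / INR (S N)).
        -- intro N. split. apply norm_nonneg.
           replace (comb p x c (S N)) with (z N). left; apply hzf.
           apply functional_extensionality; intro j. unfold comb.
           rewrite (psum_ext _ (fun k => w k j - p j)).
           ++ assert (tel : forall M, psum (fun k => w k j - p j) (S M) = z M j - p j).
              { induction M. simpl. ring. change (psum (fun k => w k j - p j) (S (S M))) with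
                   (psum (fun k => w k j - p j) (S M) + (w (S M) j - p j)). rewrite IHM. simpl. ring. }
              rewrite tel. ring.
           ++ intros k _. unfold x. destruct (hcx k) as [hck _]. field. lra.
        -- apply is_lim_seq_const.
        -- apply (is_lim_seq_incr_1 (fun n => / INR n) 0).
           replace (Finite 0) with (Rbar_inv p_infty) by reflexivity.
           apply is_lim_seq_inv. apply is_lim_seq_INR. discriminate.
  - intros m hn i; destruct m as [|m]; [lia|]. split.
    + simpl. apply Lambda_shrink; [apply hAp | intros ? ?; eapply hAM; eassumption | apply hr].
    + intro H; destruct H as [x [al [[h1 _] [h2 [h3 _]]]]]. exists x, al. auto.
Qed.
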